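(* Let $\alpha>0$ and, for $u_0:\mathbb{R}\to\mathbb{R}$, let $u^*(x)=\sup_{t>0,\ |y-x|\leq\alpha t}P(\cdot,t)*|u_0|(y)$ with $P(x,t)=\frac{1}{\pi}\frac{t}{x^2+t^2}$. (i) If $u_0\in C(\mathbb{R})\cap L^p(\mathbb{R})$ for some $1\leq p<\infty$, then $u^*\in C(\mathbb{R})$. (ii) If $u_0$ is bounded and Lipschitz continuous, then $u^*$ is bounded and Lipschitz continuous with $\mathrm{Lip}(u^* )\leq\mathrm{Lip}(u_0)$.
   Context: $\mathrm{Lip}(u)=\sup_{x\neq y}|u(x)-u(y)|/|x-y|$. *)

(* Defs.v *)
From HB Require Import structures.
From mathcomp Require Import all_boot all_order all_algebra.
From mathcomp Require Import all_classical all_reals all_analysis.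
Set Implicit Arguments. Unset Strict Implicit. Unset Printing Implicit Defensive.
Import Order.TTheory GRing.Theory Num.Theory.
Import numFieldNormedType.Exports.
Local Open Scope classical_set_scope.
Local Open Scope ring_scope.

Definition poisson {R : realType} (x t : R) : R :=
  pi^-1 * (t / (x ^+ 2 + t ^+ 2)).

Definition poisson_conv_abs {R : realType} (u0 : R -> R) (t y : R) : \bar R :=
  (\int[@lebesgue_measure R]_(z in setT) (poisson (y - z) t * `|u0 z|)%:E)%E.

Definition ntmax {R : realType} (alpha : R) (u0 : R -> R) (x : R) : \bar R :=
  ereal_sup [set e : \bar R | exists t y : R,
               [/\ 0 < t, `|y - x| <= alpha * t & e = poisson_conv_abs u0 t y]].

Definition Lip {R : realType} (u : R -> R) : \bar R :=
  ereal_sup [set e : \bar R | exists x y : R,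
               x != y /\ e = (`|u x - u y| / `|x - y|)%:E].

(* Main.v *)
Require Import Defs.
From HB Require Import structures.
From mathcomp Require Import all_boot all_order all_algebra.
From mathcomp Require Import all_classical all_reals all_analysis.
From mathcomp Require Import ring lra measurable_realfun.
Import Order.TTheory GRing.Theory Num.Theory.
Import numFieldNormedType.Exports.
Local Open Scope classical_set_scope.
Local Open Scope ring_scope.

Section K.
Variable R : realType.
Local Notation mu := (@lebesgue_measure R).

Lemma transl (G : R -> R) (c : R) : continuous G -> (forall x, 0 <= G x) ->
  (\int[mu]_(z in setT) (G z)%:E = \int[mu]_(z in setT) (G (z + c))%:E)%E.
Proof.
move=> cG G0.
have dF : ((fun x : R => x + c)^`())%classic = cst 1.
  by apply/funext => z; rewrite derive1E deriveD// derive_id derive_cst addr0.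
rewrite (@increasing_ge0_integration_by_substitutionT _ (fun x => x + c) G) //.
- by apply: eq_integral => x _; rewrite dF /= mulr1.
- by move=> x y xy; rewrite ltrD2r.
- by rewrite dF; exact: cst_continuous.
- by rewrite dF; exact: is_cvg_cst.
- by rewrite dF; exact: is_cvg_cst.
- exact: cvg_addrr_Ny.
- exact: cvg_addrr.
Qed.

Lemma scaleNy (t : R) : 0 < t -> (t * x @[x --> -oo] --> -oo)%classic.
Proof.
move=> t0.
apply/(@cvgrNyPle R R) => A; near=> x.
rewrite -ler_pdivlMl //.
Unshelve. all: by end_near. Qed.

Lemma scaley (t : R) : 0 < t -> (t * x @[x --> +oo] --> +oo)%classic.
Proof.
move=> t0.
apply/(@cvgryPge R R) => A; near=> x.
rewrite -ler_pdivrMl //.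
Unshelve. all: by end_near. Qed.

Lemma scale (G : R -> R) (t : R) : 0 < t -> continuous G -> (forall x, 0 <= G x) ->
  (\int[mu]_(z in setT) (G z)%:E = \int[mu]_(z in setT) (G (t * z) * t)%:E)%E.
Proof.
move=> t0 cG G0.
have dF : ((fun x : R => t * x)^`())%classic = cst t.
  apply/funext => z; rewrite derive1E.
  have := @deriveZ R R R id t z 1 (@derivable_id R R z 1).
  rewrite derive_id /= => h; rewrite -[RHS]mulr1; exact: h.
rewrite (@increasing_ge0_integration_by_substitutionT _ (fun x => t * x) G) //.
- by apply: eq_integral => x _; rewrite dF.
- by move=> x y xy; rewrite ltr_pM2l.
- by rewrite dF; exact: cst_continuous.
- by rewrite dF; exact: is_cvg_cst.
- by rewrite dF; exact: is_cvg_cst.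
- exact: scaleNy.
- exact: scaley.
Qed.


Lemma poissonN x t : poisson (- x) t = poisson x t :> R.
Proof. by rewrite /poisson sqrrN. Qed.

Lemma poisson_ge0 x t : 0 < t -> 0 <= poisson x t :> R.
Proof.
move=> t0; rewrite /poisson; apply: mulr_ge0.
  by rewrite invr_ge0 ltW // pi_gt0.
by apply: divr_ge0; [exact: ltW | rewrite addr_ge0 // sqr_ge0].
Qed.

Lemma continuous_poisson t : 0 < t -> continuous (fun x : R => poisson x t).
Proof.
move=> t0 x; rewrite /poisson.
apply: cvgM; first exact: cvg_cst.
apply: cvgM; first exact: cvg_cst.
apply: cvgV.
  by rewrite gt_eqF // ltr_wpDl ?sqr_ge0 // exprn_gt0.
apply: cvgD; last exact: cvg_cst.
exact: exprn_continuous.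
Qed.

Lemma alg1 (P t x : R) : P != 0 -> 0 < t ->
  P^-1 * (t / ((t * x) ^+ 2 + t ^+ 2)) * t = P^-1 * (1 + x ^+ 2)^-1.
Proof.
move=> hP t0; have ht : t != 0 by rewrite gt_eqF.
have h1 : 1 + x ^+ 2 != 0 by rewrite gt_eqF // ltr_pwDl // sqr_ge0.
have h4 : (t * x) ^+ 2 + t ^+ 2 != 0.
  by rewrite gt_eqF // ltr_wpDl ?sqr_ge0 // exprn_gt0.
field.
by repeat (apply/andP; split).
Qed.

Lemma int_poisson t : 0 < t ->
  (\int[mu]_(x in setT) (poisson x t)%:E = 1%:E)%E.
Proof.
move=> t0.
rewrite (@scale (fun x => poisson x t) t) //; last first.
  by move=> x; exact: poisson_ge0.
  exact: continuous_poisson.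
under eq_integral => x _.
  have -> : poisson (t * x) t * t = pi^-1 * (oneDsqr x)^-1.
    rewrite /poisson /oneDsqr; apply: alg1.
    - by rewrite gt_eqF // pi_gt0.
    - by [].
  over.
rewrite ge0_symfun_integralT; last first.
- by move=> x /=; rewrite /oneDsqr sqrrN.
- move=> x; apply: cvgM; first exact: cvg_cst.
  exact: continuous_oneDsqrV.
- by move=> x; rewrite mulr_ge0 // invr_ge0 ?ltW ?pi_gt0 // ?invr_ge0 // ltW // (lt_le_trans _ (oneDsqr_ge1 x)).
rewrite -set_itvcy.
under eq_integral do rewrite EFinM.
rewrite (@ge0_integralZl_EFin _ _ _ mu _ _ (fun x => ((oneDsqr x)^-1)%:E)); last 4 first.
- by [].
- by move=> x _; rewrite lee_fin invr_ge0 (le_trans _ (oneDsqr_ge1 x)).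
- apply/measurable_EFinP; apply: measurable_funTS.
  exact: continuous_measurable_fun continuous_oneDsqrV.
- by rewrite invr_ge0 ltW // pi_gt0.
rewrite integral0y_oneDsqr -EFinM.
have hp : (pi : R) != 0 by rewrite gt_eqF // pi_gt0.
by rewrite [pi^-1 * _]mulrA mulVf // mul1r divff.
Qed.

Lemma meas_cont (f : R -> R) : continuous f ->
  measurable_fun setT (fun x => (f x)%:E).
Proof. by move=> cf; apply/measurable_EFinP; exact: continuous_measurable_fun. Qed.

Lemma continuous_poisson_shift (t y : R) : 0 < t -> continuous (fun z : R => poisson (y - z) t).
Proof.
move=> t0 z.
apply: (@continuous_comp _ _ _ (fun z => y - z) (fun x => poisson x t)).
  by apply: cvgB; [exact: cvg_cst | exact: cvg_id].
exact: continuous_poisson.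
Qed.

Lemma continuous_shift (g : R -> R) d : continuous g -> continuous (fun z => g (z + d)).
Proof.
move=> cg z.
apply: (@continuous_comp _ _ _ (fun z => z + d) g).
  by apply: cvgD; [exact: cvg_id | exact: cvg_cst].
exact: cg.
Qed.

Lemma int_poisson_shift (t y : R) : 0 < t ->
  (\int[mu]_(z in setT) (poisson (y - z) t)%:E = 1%:E)%E.
Proof.
move=> t0.
rewrite (@transl (fun z => poisson (y - z) t) y); last 2 first.
- exact: continuous_poisson_shift.
- by move=> x; exact: poisson_ge0.
under eq_integral do rewrite opprD addrCA subrr addr0 poissonN.
exact: int_poisson.
Qed.

Definition conv (g : R -> R) (t y : R) : \bar R :=
  (\int[mu]_(z in setT) (poisson (y - z) t * g z)%:E)%E.

Lemma conv_ge0 (g : R -> R) (t y : R) : 0 < t -> (forall z, 0 <= g z) -> (0 <= conv g t y)%E.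
Proof.
move=> t0 g0; apply: integral_ge0 => z _.
by rewrite lee_fin mulr_ge0 // poisson_ge0.
Qed.

Lemma conv_shift (g : R -> R) (t y d : R) : 0 < t -> continuous g -> (forall z, 0 <= g z) ->
  conv g t (y + d) = (\int[mu]_(z in setT) (poisson (y - z) t * g (z + d))%:E)%E.
Proof.
move=> t0 cg g0; rewrite /conv.
rewrite (@transl (fun z => poisson (y + d - z) t * g z) d); last 2 first.
- by move=> z; apply: cvgM; [exact: continuous_poisson_shift | exact: cg].
- by move=> x; rewrite mulr_ge0 // poisson_ge0.
by under eq_integral do rewrite opprD addrACA subrr addr0.
Qed.

Lemma int_h (g : R -> R) (t y d w : R) : 0 < t -> continuous g -> (forall z, 0 <= g z) -> 0 <= w ->
  (\int[mu]_(z in setT) (poisson (y - z) t * (g (z + d) + w))%:E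
   = conv g t (y + d) + w%:E)%E.
Proof.
move=> t0 cg g0 w0.
under eq_integral do rewrite mulrDr EFinD.
rewrite ge0_integralD //; last 4 first.
- by move=> z _; rewrite lee_fin mulr_ge0 // poisson_ge0.
- apply: meas_cont => z; apply: cvgM; first exact: continuous_poisson_shift.
  exact: continuous_shift.
- by move=> z _; rewrite lee_fin mulr_ge0 // poisson_ge0.
- apply: meas_cont => z; apply: cvgM; first exact: continuous_poisson_shift.
  exact: cvg_cst.
rewrite -conv_shift //; congr (_ + _)%E.
under eq_integral do rewrite mulrC EFinM.
rewrite ge0_integralZl_EFin //; last 2 first.
- by move=> z _; rewrite lee_fin poisson_ge0.
- by apply: meas_cont; exact: continuous_poisson_shift.
by rewrite int_poisson_shift // mule1.
Qed.

Lemma gle (a e p : R) : 0 <= a -> 0 < e -> 1 <= p ->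
  a <= e + (e `^ (p - 1))^-1 * a `^ p.
Proof.
move=> a0 e0 p1.
have ep : 0 < e `^ (p - 1) by rewrite powR_gt0.
have [ae|ea] := leP a e.
  by rewrite ler_wpDr // mulr_ge0 ?invr_ge0 ?powR_ge0 // ltW.
have a0' : 0 < a by rewrite (lt_trans e0).
have p0 : 0 < p by exact: (lt_le_trans ltr01 p1).
have -> : a `^ p = a * a `^ (p - 1) by rewrite mulr_powRB1 // ltW.
apply: ler_wpDl; first exact: ltW.
rewrite mulrCA ler_pMr // ler_pdivlMl // mulr1.
apply: ge0_ler_powR; first by rewrite subr_ge0.
- by rewrite nnegrE ltW.
- by rewrite nnegrE ltW.
- exact: ltW.
Qed.

Lemma conv_bound (g : R -> R) (p Q t y e A K : R) (h : R -> R) :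
  0 < t -> continuous g -> (forall z, 0 <= g z) -> 1 <= p -> 0 < e -> 0 <= K ->
  continuous h -> (forall z, 0 <= h z) ->
  (\int[mu]_(z in setT) (g z `^ p)%:E <= Q%:E)%E ->
  (forall z, `|y - z| <= A -> g z <= h z) ->
  (forall z, A < `|y - z| -> poisson (y - z) t <= K) ->
  (conv g t y <= \int[mu]_(z in setT) (poisson (y - z) t * h z)%:E + e%:E
     + ((e `^ (p - 1))^-1 * K * Q)%:E)%E.
Proof.
move=> t0 cg g0 p1 e0 K0 ch h0 hQ hA hK.
set c := (e `^ (p - 1))^-1.
have c0 : 0 <= c by rewrite invr_ge0 powR_ge0.
have mP : measurable_fun (setT : set R) (fun z : R => (poisson (y - z) t)%:E).
  by apply: meas_cont; exact: continuous_poisson_shift.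
have mPh : measurable_fun (setT : set R) (fun z : R => (poisson (y - z) t * h z)%:E).
  apply: meas_cont => z; apply: cvgM; first exact: continuous_poisson_shift.
  exact: ch.
have mgp : measurable_fun (setT : set R) (fun z : R => (g z `^ p)%:E).
  apply/measurable_EFinP.
  exact: (measurableT_comp (measurable_powR p) (continuous_measurable_fun cg)).
have mgp' : measurable_fun (setT : set R) (fun z : R => (c * K * g z `^ p)%:E).
  apply/measurable_EFinP; apply: measurable_funM; first exact: measurable_cst.
  by apply/measurable_EFinP.
have P0 z : 0 <= poisson (y - z) t by exact: poisson_ge0.
apply: (@le_trans _ _ (\int[mu]_(z in setT) ((poisson (y - z) t * h z)%:E
   + (e%:E * (poisson (y - z) t)%:E) + (c * K * g z `^ p)%:E))%E).
  apply: ge0_le_integral => //.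
  - by move=> z _; rewrite lee_fin mulr_ge0.
  - apply: meas_cont => z; apply: cvgM; first exact: continuous_poisson_shift.
    exact: cg.
  - apply: emeasurable_funD => //; apply: emeasurable_funD => //.
    by apply: emeasurable_funM => //; exact: measurable_cst.
  move=> z _; rewrite -EFinM -!EFinD lee_fin.
  have Hh := h0 z; have Hg := g0 z; have HP := P0 z.
  have Hgp : 0 <= g z `^ p by exact: powR_ge0.
  have Hcgp : 0 <= c * g z `^ p by exact: mulr_ge0.
  have [zA|zA] := leP `|y - z| A.
    have H1 := ler_wpM2l HP (hA z zA).
    have H4 : 0 <= K * (c * g z `^ p) by exact: mulr_ge0.
    have H5 : 0 <= e * poisson (y - z) t by rewrite mulr_ge0 // ltW.
    nra.
  have H1 := ler_wpM2l HP (@gle (g z) e p Hg e0 p1).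
  have H2 := ler_wpM2r Hcgp (hK z zA).
  have H3 : 0 <= poisson (y - z) t * h z by exact: mulr_ge0.
  rewrite -/c in H1.
  nra.
have mPe : measurable_fun (setT : set R) (fun z : R => (e%:E * (poisson (y - z) t)%:E)%E).
  by apply: emeasurable_funM => //; exact: measurable_cst.
rewrite ge0_integralD; last 5 first.
- by [].
- move=> z _; apply: adde_ge0; rewrite lee_fin.
    exact: mulr_ge0.
  apply: mulr_ge0 => //; exact: ltW.
- exact: emeasurable_funD.
- by move=> z _; rewrite lee_fin !mulr_ge0 // powR_ge0.
- exact: mgp'.
rewrite ge0_integralD; last 5 first.
- by [].
- by move=> z _; rewrite lee_fin mulr_ge0.
- exact: mPh.
- by move=> z _; rewrite lee_fin mulr_ge0 // ltW.
- exact: mPe.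
rewrite ge0_integralZl_EFin //; last 2 first.
- by move=> z _; rewrite lee_fin.
- exact: ltW.
rewrite int_poisson_shift // mule1 leeD2l //.
under eq_integral do rewrite EFinM.
rewrite ge0_integralZl_EFin //; last 2 first.
- by move=> z _; rewrite lee_fin powR_ge0.
- exact: mulr_ge0.
rewrite (EFinM (c * K) Q) EFinM; apply: lee_wpmul2l => //.
by apply: mule_ge0; rewrite lee_fin.
Qed.

Lemma unif_cont (g : R -> R) (a b w : R) : continuous g -> 0 < w ->
  exists2 d, 0 < d & forall u v, a <= u <= b -> `|u - v| <= d -> `|g u - g v| <= w.
Proof.
move=> cg w0.
have H := (proj1 (compact_near_coveringP `[a, b]) (@segment_compact R a b)) R (0^'+)
  (fun d u => forall v, `|u - v| <= d -> `|g u - g v| <= w) _.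
have : \forall d \near 0^'+, `[a, b] `<=` (fun u => forall v, `|u - v| <= d -> `|g u - g v| <= w).
  apply: H => x _.
  have /cvgrPdist_lt/(_ (w / 2)) := cg x.
  rewrite divr_gt0 // => /(_ isT) /nbhs_ballP [e e0 He].
  near=> x' i => v /= hv.
  have h1 : `|x - x'| < e / 2.
    near: x'; apply/nbhs_ballP; exists (e / 2) => /=; first by rewrite divr_gt0.
    by move=> y; rewrite /ball /=.
  have h2 : i < e / 2 by near: i; apply: nbhs_right_lt; rewrite divr_gt0.
  have h3 : `|x - v| < e.
    rewrite (splitr e); apply: (le_lt_trans (ler_distD x' _ _)).
    by rewrite ltrD // (le_lt_trans hv).
  have A1 : `|g x - g x'| < w / 2 by apply: He; rewrite /ball /= (lt_trans h1) // ltr_pdivrMr // ltr_pMr // ltr1n.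
  have A2 : `|g x - g v| < w / 2 by apply: He.
  rewrite (splitr w); apply: (le_trans (ler_distD (g x) _ _)).
  by rewrite distrC ltW // ltrD.
move=> H2.
have [d [Hd d0]] := filter_ex (filterI H2 (@nbhs_right_gt R 0)).
exists d => // u v uab uv.
by apply: Hd => //; rewrite /= in_itv.
Unshelve. all: by end_near. Qed.

Lemma conv_abs (u0 : R -> R) (t y : R) :
  poisson_conv_abs u0 t y = conv (fun z => `|u0 z|) t y.
Proof. by []. Qed.

Lemma ntmax_ub (alpha : R) (u0 : R -> R) (x t y : R) : 0 < t -> `|y - x| <= alpha * t ->
  (conv (fun z => `|u0 z|%R) t y <= ntmax alpha u0 x)%E.
Proof. by move=> t0 hy; apply: ereal_sup_ubound; exists t, y. Qed.

Lemma ntmax_le (alpha : R) (u0 : R -> R) (x : R) (B : \bar R) :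
  (forall t y, 0 < t -> `|y - x| <= alpha * t -> (conv (fun z => `|u0 z|%R) t y <= B)%E) ->
  (ntmax alpha u0 x <= B)%E.
Proof. by move=> H; apply: ge_ereal_sup => _ [t [y [t0 hy ->]]]; exact: H. Qed.

Lemma ntmax_ge0 (alpha : R) (u0 : R -> R) (x : R) : 0 < alpha -> (0 <= ntmax alpha u0 x)%E.
Proof.
move=> a0; apply: (le_trans (@conv_ge0 (fun z => `|u0 z|) 1 x ltr01 (fun z => normr_ge0 _))).
by apply: ntmax_ub => //; rewrite subrr normr0 mulr1 ltW.
Qed.

Lemma fine_close (e1 e2 : \bar R) (c : R) : e1 \is a fin_num -> e2 \is a fin_num ->
  (e1 <= e2 + c%:E)%E -> (e2 <= e1 + c%:E)%E -> `|fine e1 - fine e2| <= c.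
Proof.
case: e1 => [r1||] //; case: e2 => [r2||] // _ _.
rewrite -!EFinD !lee_fin /= => h1 h2.
rewrite ler_norml; apply/andP; split; lra.
Qed.

Lemma lip_continuous (f : R -> R) (L : R) : 0 <= L ->
  (forall a b, `|f a - f b| <= L * `|a - b|) -> continuous f.
Proof.
move=> L0 hL x; apply/cvgrPdist_le => e e0.
have L1 : 0 < L + 1 by rewrite ltr_wpDl.
near=> y.
apply: (le_trans (hL x y)).
have : `|x - y| <= e / (L + 1).
  near: y; apply/nbhs_ballP; exists (e / (L + 1)) => /=; first by rewrite divr_gt0.
  by move=> y; rewrite /ball /= => /ltW.
move=> hy; apply: (le_trans (ler_wpM2l L0 hy)).
by rewrite mulrCA ger_pMr // ler_pdivrMr // mul1r lerDl.
Unshelve. all: by end_near. Qed.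

Lemma conv_mono (g h : R -> R) (t y : R) : 0 < t -> continuous g -> continuous h ->
  (forall z, 0 <= g z) -> (forall z, g z <= h z) ->
  (conv g t y <= \int[mu]_(z in setT) (poisson (y - z) t * h z)%:E)%E.
Proof.
move=> t0 cg ch g0 gh; apply: ge0_le_integral => //.
- by move=> z _; rewrite lee_fin mulr_ge0 // poisson_ge0.
- apply: meas_cont => z; apply: cvgM; first exact: continuous_poisson_shift.
  exact: cg.
- apply: meas_cont => z; apply: cvgM; first exact: continuous_poisson_shift.
  exact: ch.
- by move=> z _; rewrite lee_fin ler_wpM2l // poisson_ge0.
Qed.

Lemma conv_le_shift (g : R -> R) (t y d w : R) : 0 < t -> continuous g ->
  (forall z, 0 <= g z) -> 0 <= w -> (forall z, g z <= g (z + d) + w) ->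
  (conv g t y <= conv g t (y + d) + w%:E)%E.
Proof.
move=> t0 cg g0 w0 H; rewrite -int_h //.
apply: conv_mono => //.
by move=> z; apply: cvgD; [exact: continuous_shift|exact: cvg_cst].
Qed.

Lemma conv_le_cst (g : R -> R) (t y M : R) : 0 < t -> continuous g ->
  (forall z, 0 <= g z) -> (forall z, g z <= M) -> (conv g t y <= M%:E)%E.
Proof.
move=> t0 cg g0 gM.
have M0 : 0 <= M by exact: le_trans (g0 0) (gM 0).
apply: (le_trans (@conv_mono g (fun=> M) t y t0 cg (fun z => cvg_cst _) g0 gM)).
under eq_integral do rewrite mulrC EFinM.
rewrite ge0_integralZl_EFin //; last 2 first.
- by move=> z _; rewrite lee_fin poisson_ge0.
- by apply: meas_cont; exact: continuous_poisson_shift.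
by rewrite int_poisson_shift // mule1.
Qed.

Lemma part2 (alpha : R) (halpha : 0 < alpha) (u0 : R -> R) :
  (exists M : R, forall x, `|u0 x| <= M) -> (Lip u0 < +oo)%E ->
   (forall x, ntmax alpha u0 x \is a fin_num) /\
   (exists M : R, forall x, `|fine (ntmax alpha u0 x)| <= M) /\
   (Lip (fun x => fine (ntmax alpha u0 x)) <= Lip u0)%E.
Proof.
move=> [M hM] hL.
have Lge0 : (0 <= Lip u0)%E.
  apply: le_trans (_ : ((`|u0 0 - u0 1| / `|0 - 1|)%:E <= _)%E).
    by rewrite lee_fin divr_ge0.
  apply: ereal_sup_ubound; exists 0, 1; split => //.
  by rewrite eq_sym oner_neq0.
set L := fine (Lip u0).
have hLE : Lip u0 = L%:E by rewrite /L fineK // ge0_fin_numE.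
have L0 : 0 <= L by rewrite -lee_fin -hLE.
have lip : forall a b, `|u0 a - u0 b| <= L * `|a - b|.
  move=> a b; have [->|ab] := eqVneq a b; first by rewrite !subrr normr0 mulr0.
  have : ((`|u0 a - u0 b| / `|a - b|)%:E <= Lip u0)%E.
    by apply: ereal_sup_ubound; exists a, b.
  by rewrite hLE lee_fin ler_pdivrMr ?normr_gt0 ?subr_eq0 // mulrC.
pose g : R -> R := fun z => `|u0 z|.
have g0 : forall z, 0 <= g z by move=> z; exact: normr_ge0.
have lipg : forall a b, `|g a - g b| <= L * `|a - b|.
  by move=> a b; apply: le_trans (lip a b); exact: ler_dist_dist.
have cg : continuous g := @lip_continuous g L L0 lipg.
have gshift : forall d z, g z <= g (z + d) + L * `|d|.
  move=> d z; have := lipg z (z + d).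
  rewrite opprD addrA subrr sub0r normrN => h.
  by rewrite -lerBlDl; apply: le_trans (ler_norm _) h.
have hle : forall x x', (ntmax alpha u0 x <= ntmax alpha u0 x' + (L * `|x - x'|)%:E)%E.
  move=> x x'; apply: ntmax_le => t y t0 hy.
  apply: le_trans (@conv_le_shift g t y (x' - x) (L * `|x' - x|) t0 cg g0 _ (gshift _)) _.
    exact: mulr_ge0.
  rewrite distrC leeD2r //; apply: ntmax_ub => //.
  by have -> : y + (x' - x) - x' = y - x by ring.
have hub : forall x, (ntmax alpha u0 x <= M%:E)%E.
  move=> x; apply: ntmax_le => t y t0 _; exact: conv_le_cst.
have fin : forall x, ntmax alpha u0 x \is a fin_num.
  move=> x; rewrite ge0_fin_numE ?ntmax_ge0 //.
  by apply: le_lt_trans (hub x) _; exact: ltry.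
split => //; split.
  exists M => x; rewrite ger0_norm.
    by rewrite -lee_fin fineK // hub.
  by rewrite fine_ge0 // ntmax_ge0.
apply: ge_ereal_sup => _ [x [y [xy ->]]].
rewrite hLE lee_fin ler_pdivrMr ?normr_gt0 ?subr_eq0 //.
apply: fine_close => //.
by rewrite distrC.
Qed.

Lemma poisson_le1 (x t : R) : 0 < t -> poisson x t <= pi^-1 * t^-1.
Proof.
move=> t0; rewrite /poisson; apply: ler_wpM2l; first by rewrite invr_ge0 ltW // pi_gt0.
rewrite ler_pdivrMr; last by rewrite ltr_wpDl ?sqr_ge0 ?exprn_gt0.
rewrite mulrDr [t ^+ 2]expr2 [t^-1 * (t * t)]mulrA mulVf ?gt_eqF // mul1r lerDr.
by rewrite mulr_ge0 ?invr_ge0 ?sqr_ge0 // ltW.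
Qed.

Lemma poisson_tail (x t T A : R) : 0 < t -> t <= T -> 0 < A -> A < `|x| ->
  poisson x t <= pi^-1 * (T / A ^+ 2).
Proof.
move=> t0 tT A0 Ax; rewrite /poisson; apply: ler_wpM2l; first by rewrite invr_ge0 ltW // pi_gt0.
have x2 : A ^+ 2 <= x ^+ 2.
  rewrite -(real_normK (num_real x)); have Ax' := ltW Ax; nra.
apply: (@le_trans _ _ (t / A ^+ 2)).
  apply: ler_wpM2l; first exact: ltW.
  rewrite lef_pV2 ?posrE ?exprn_gt0 //; last by rewrite ltr_wpDl ?sqr_ge0 ?exprn_gt0.
  by rewrite (le_trans x2) // lerDl sqr_ge0.
by rewrite ler_wpM2r // invr_ge0 sqr_ge0.
Qed.

Lemma int_cst (t y B : R) : 0 < t -> 0 <= B ->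
  (\int[mu]_(z in setT) (poisson (y - z) t * B)%:E = B%:E)%E.
Proof.
move=> t0 B0.
under eq_integral do rewrite mulrC EFinM.
rewrite ge0_integralZl_EFin //; last 2 first.
- by move=> z _; rewrite lee_fin poisson_ge0.
- by apply: meas_cont; exact: continuous_poisson_shift.
by rewrite int_poisson_shift // mule1.
Qed.

Section Part1.
Variables (g : R -> R) (p Q : R).
Hypotheses (cg : continuous g) (g0 : forall z, 0 <= g z) (p1 : 1 <= p)
  (hQ : (\int[mu]_(z in setT) (g z `^ p)%:E <= Q%:E)%E) (Q0 : 0 <= Q).

Lemma large_t (e : R) : 0 < e -> exists2 T, 0 < T &
  forall t y, T <= t -> (conv g t y <= (e + e)%:E)%E.
Proof.
move=> e0.
set c := (e `^ (p - 1))^-1.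
have c0 : 0 <= c by rewrite invr_ge0 powR_ge0.
have pi0 : 0 < (pi : R) by exact: pi_gt0.
set X := c * pi^-1 * Q.
have X0 : 0 <= X by rewrite mulr_ge0 // mulr_ge0 // invr_ge0 ltW.
exists (1 + X / e); first by rewrite ltr_wpDr // divr_ge0 // ltW.
move=> t y tT.
have t0 : 0 < t by apply: lt_le_trans tT; rewrite ltr_wpDr // divr_ge0 // ltW.
have K0 : 0 <= pi^-1 * t^-1 by rewrite mulr_ge0 // invr_ge0 ltW.
apply: (le_trans (@conv_bound g p Q t y e (-1) (pi^-1 * t^-1) (fun=> 0) t0 cg g0 p1 e0 K0
  (fun _ => cvg_cst _) (fun _ => lexx 0) hQ _ _)).
- move=> z h; exfalso; move: (normr_ge0 (y - z)); rewrite leNgt.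
  by rewrite (le_lt_trans h) // ltrN10.
- by move=> z _; exact: poisson_le1.
under eq_integral do rewrite mulr0.
rewrite integral0 add0e EFinD leeD2l // lee_fin.
have -> : c * (pi^-1 * t^-1) * Q = X / t by rewrite /X; ring.
rewrite ler_pdivrMr // (le_trans _ (ler_wpM2l (ltW e0) tT)) //.
by rewrite mulrDr mulr1 mulrCA divff ?gt_eqF // mulr1 lerDr ltW.
Qed.

Lemma local_bound (a x0 T : R) : 0 < T -> 0 <= a -> exists b : R,
  forall t y, 0 < t -> t <= T -> `|y - x0| <= a -> (conv g t y <= b%:E)%E.
Proof.
move=> T0 a0.
have [c1 _ Hc1] : exists2 c1, c1 \in `[x0 - a - 1, x0 + a + 1] &
    forall z, z \in `[x0 - a - 1, x0 + a + 1] -> g z <= g c1.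
  apply: EVT_max; first lra.
  exact: continuous_subspaceT.
set B := g c1.
set c := (1 `^ (p - 1))^-1.
set K := pi^-1 * (T / 1 ^+ 2).
have K0 : 0 <= K.
  apply: mulr_ge0; first by rewrite invr_ge0 ltW // pi_gt0.
  by apply: divr_ge0; [exact: ltW | exact: sqr_ge0].
exists (B + 1 + c * K * Q) => t y t0 tT hy.
apply: (le_trans (@conv_bound g p Q t y 1 1 K (fun=> B) t0 cg g0 p1 ltr01 K0
  (fun _ => cvg_cst _) (fun _ => g0 c1) hQ _ _)).
- move=> z hz; apply: Hc1; rewrite in_itv /=.
  move: hy hz; rewrite !ler_norml => /andP[h1 h2] /andP[h3 h4].
  by apply/andP; split; lra.
- move=> z hz; apply: poisson_tail => //; exact: ltr01.
by rewrite int_cst //; exact: g0.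
Qed.

Lemma equicont (x0 a T e : R) : 0 < T -> 0 <= a -> 0 < e -> exists2 d, 0 < d &
  forall t y d', 0 < t -> t <= T -> `|y - x0| <= a -> `|d'| <= d ->
  (conv g t y <= conv g t (y + d') + (e + e + e)%:E)%E.
Proof.
move=> T0 a0 e0.
set c := (e `^ (p - 1))^-1.
have c0 : 0 <= c by rewrite invr_ge0 powR_ge0.
have pi0 : 0 < (pi : R) by exact: pi_gt0.
set Y := c * pi^-1 * T * Q.
have Y0 : 0 <= Y by rewrite !mulr_ge0 // ?invr_ge0 // ltW.
set A := 1 + Y / e.
have A1 : 1 <= A by rewrite lerDl divr_ge0 // ltW.
have A0 : 0 < A by rewrite (lt_le_trans ltr01).
have eA : e * A = e + Y by rewrite /A mulrDr mulr1 mulrCA divff ?gt_eqF // mulr1.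
set K := pi^-1 * (T / A ^+ 2).
have K0 : 0 <= K.
  apply: mulr_ge0; first by rewrite invr_ge0 ltW.
  by apply: divr_ge0; [exact: ltW | exact: sqr_ge0].
have [d d0 Hd] := @unif_cont g (x0 - a - A) (x0 + a + A) e cg e0.
exists d => // t y d' t0 tT hy hd.
have ch : continuous (fun z => g (z + d') + e).
  by move=> z; apply: cvgD; [exact: continuous_shift | exact: cvg_cst].
have h0 : forall z, 0 <= g (z + d') + e by move=> z; rewrite addr_ge0 // ltW.
apply: (le_trans (@conv_bound g p Q t y e A K _ t0 cg g0 p1 e0 K0 ch h0 hQ _ _)).
- move=> z hz.
  have hzd : `|z - (z + d')| <= d by rewrite opprD addrA subrr sub0r normrN.
  have hz' : x0 - a - A <= z <= x0 + a + A.
    move: hy hz; rewrite !ler_norml => /andP[h1 h2] /andP[h3 h4].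
    by apply/andP; split; lra.
  have := Hd z (z + d') hz' hzd.
  rewrite ler_norml => /andP[_ h]; lra.
- move=> z hz; exact: poisson_tail.
rewrite int_h //; last exact: ltW.
move: (conv g t (y + d')) => C; rewrite -!addeA; apply: leeD; first exact: le_refl.
rewrite -!EFinD lee_fin -/c addrA lerD2l.
have -> : c * K * Q = Y / A ^+ 2 by rewrite /K /Y; ring.
rewrite ler_pdivrMr ?exprn_gt0 //.
nra.
Qed.

End Part1.

Lemma part1 (alpha : R) (halpha : 0 < alpha) (u0 : R -> R) :
  (continuous u0 /\
    exists p : R, 1 <= p /\
      (\int[mu]_(z in setT) ((`|u0 z| `^ p)%:E) < +oo)%E) ->
   (forall x, ntmax alpha u0 x \is a fin_num) /\
   continuous (fun x => fine (ntmax alpha u0 x)).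
Proof.
move=> [cu [p [p1 hp]]].
pose g : R -> R := fun z => `|u0 z|.
have cg : continuous g.
  move=> x; apply: (continuous_comp (cu x)); exact: norm_continuous.
have g0 : forall z, 0 <= g z by move=> z; exact: normr_ge0.
have I0 : (0 <= \int[mu]_(z in setT) (g z `^ p)%:E)%E.
  by apply: integral_ge0 => z _; rewrite lee_fin powR_ge0.
set Q := fine (\int[mu]_(z in setT) (g z `^ p)%:E).
have hQ : (\int[mu]_(z in setT) (g z `^ p)%:E <= Q%:E)%E.
  by rewrite /Q fineK // ge0_fin_numE.
have Q0 : 0 <= Q by rewrite /Q fine_ge0.
have fin : forall x0, ntmax alpha u0 x0 \is a fin_num.
  move=> x0.
  have [T T0 HT] := @large_t g p Q cg g0 p1 hQ Q0 1 ltr01.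
  have aT0 : 0 <= alpha * T by rewrite mulr_ge0 // ltW.
  have [b Hb] := @local_bound g p Q cg g0 p1 hQ (alpha * T) x0 T T0 aT0.
  rewrite ge0_fin_numE ?ntmax_ge0 //.
  apply: (@le_lt_trans _ _ (2 + `|b|)%:E); last exact: ltry.
  apply: ntmax_le => t y t0 hy.
  have [Tt|tT] := leP T t.
    apply: (le_trans (HT t y Tt)); rewrite lee_fin lerDl //.
  apply: (le_trans (Hb t y t0 (ltW tT) _)).
    apply: (le_trans hy); rewrite ler_pM2l // ltW //.
  rewrite lee_fin (le_trans (ler_norm b)) // lerDr //.
split => // x0.
apply/cvgrPdist_le => eps eps0.
set e := eps / 3.
have e0 : 0 < e by rewrite divr_gt0.
have e3 : e + e + e = eps by rewrite /e; field.
have [T T0 HT] := @large_t g p Q cg g0 p1 hQ Q0 e e0.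
have a1 : 0 <= alpha * T + 1 by rewrite addr_ge0 // mulr_ge0 // ltW.
have [d d0 Hd] := @equicont g p Q cg g0 p1 hQ Q0 x0 (alpha * T + 1) T e T0 a1 e0.
set d' := Num.min d 1 / 2.
have d'0 : 0 < d' by rewrite divr_gt0 // lt_min d0 ltr01.
have d'1 : d' <= 1 / 2 by rewrite ler_pM2r // ge_min lexx orbT.
have d'd : d' + d' <= d by rewrite -splitr ge_min lexx.
have claim : forall x x', `|x - x0| < d' -> `|x' - x0| < d' ->
    (ntmax alpha u0 x <= ntmax alpha u0 x' + eps%:E)%E.
  move=> x x' hx hx'.
  apply: ntmax_le => t y t0 hy.
  have [Tt|tT] := leP T t.
    apply: (le_trans (HT t y Tt)).
    apply: (@le_trans _ _ (0 + eps%:E)%E); last by rewrite leeD2r // ntmax_ge0.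
    by rewrite add0e lee_fin -e3 lerDl ltW.
  have aT : alpha * t <= alpha * T by rewrite ler_pM2l // ltW.
  have hy' : `|y - x0| <= alpha * T + 1.
    move: hy hx; rewrite ler_norml ltr_norml => /andP[h1 h2] /andP[h3 h4].
    by rewrite ler_norml; apply/andP; split; lra.
  have hd : `|x' - x| <= d.
    move: hx hx'; rewrite !ltr_norml => /andP[h1 h2] /andP[h3 h4].
    by rewrite ler_norml; apply/andP; split; lra.
  apply: (le_trans (Hd t y (x' - x) t0 (ltW tT) hy' hd)).
  rewrite e3 leeD2r //; apply: ntmax_ub => //.
  by have -> : y + (x' - x) - x' = y - x by ring.
near=> x.
have hx : `|x - x0| < d'.
  near: x; apply/nbhs_ballP; exists d' => //= x.
  by rewrite /ball /= distrC.
apply: fine_close => //.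
- by apply: claim => //; rewrite subrr normr0.
- by apply: claim => //; rewrite subrr normr0.
Unshelve. all: by end_near. Qed.

End K.
Theorem lemma20 (R : realType) (alpha : R) (halpha : 0 < alpha) (u0 : R -> R) :
  (* (i) *)
  ((continuous u0 /\
    exists p : R, 1 <= p /\
      (\int[@lebesgue_measure R]_(z in setT) ((`|u0 z| `^ p)%:E) < +oo)%E) ->
   (forall x, ntmax alpha u0 x \is a fin_num) /\
   continuous (fun x => fine (ntmax alpha u0 x)))
  /\
  (* (ii) *)
  ((exists M : R, forall x, `|u0 x| <= M) -> (Lip u0 < +oo)%E ->
   (forall x, ntmax alpha u0 x \is a fin_num) /\
   (exists M : R, forall x, `|fine (ntmax alpha u0 x)| <= M) /\
   (Lip (fun x => fine (ntmax alpha u0 x)) <= Lip u0)%E).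
Proof.
split; [exact: part1 | exact: part2].
Qed.
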